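(* Let $\mathcal{H}$ be any $4$-uniform directed hypergraph on $\{1,2,3\}$ and consider any network dynamical system on $\mathcal{H}$ with smooth $F$ and coupling homogeneous in each order. Then its vector field is not equal to the Guckenheimer--Holmes vector field $$\dot x_1 = x_1 + a x_1^3 + b x_1x_2^2 + c x_1x_3^2,\quad \dot x_2 = x_2 + a x_2^3 + b x_2x_3^2 + c x_1^2x_2,\quad \dot x_3 = x_3 + a x_3^3 + b x_1^2x_3 + c x_2^2x_3$$ for any real $a,b,c$ with $b\neq c$; in particular the Guckenheimer--Holmes system with $a+b+c=-1$, $-\tfrac13<a<0$, $c<a<b<0$ cannot be realized.
   Context: A directed hypergraph on $\mathcal{V}=\{1,\dots,N\}$ is a set $\mathcal{E}$ of hyperedges $e=(T(e),H(e))$ with nonempty tail and head; the order of $e$ is $|T(e)|+1$; $\mathcal H$ is $m$-uniform if all hyperedges have order $m$ (for three vertices and $m=4$ this means $T(e)=\{1,2,3\}$ for every $e$). A network dynamical system with coupling homogeneous in each order is $\dot x_k = F(x_k) + \sum_{e\in\mathcal{E}:\,k\in H(e)} G^{(|e|)}(x_k; x_{T(e)})$ on $\mathbb{R}^N$, with $G^{(m)}:\mathbb{R}\times\mathbb{R}^{m-1}\to\mathbb{R}$ smooth, symmetric in its last $m-1$ arguments and depending nontrivially on them. *)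

(* Defs.v *)
From mathcomp Require Import all_boot all_order all_algebra.
From mathcomp Require Import all_classical all_reals all_analysis.
Set Implicit Arguments. Unset Strict Implicit. Unset Printing Implicit Defensive.
Import Order.TTheory GRing.Theory Num.Theory.
Import numFieldNormedType.Exports.
Local Open Scope ring_scope.

(* Iterated partial derivatives of f : R^n -> R along the coordinate
   directions listed in l (the head of the list is applied last). *)
Fixpoint iterD (R : realType) (n : nat) (l : seq 'I_n) (f : 'rV[R]_n -> R)
  : 'rV[R]_n -> R :=
  if l is i :: l' then fun x => derive (iterD l' f) x (delta_mx 0 i) else f.

Definition smooth (R : realType) (n : nat) (f : 'rV[R]_n -> R) : Prop :=
  forall l : seq 'I_n,
    continuous (iterD l f) /\
    forall (i : 'I_n) (x : 'rV[R]_n), derivable (iterD l f) x (delta_mx 0 i).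

Definition smooth1 (R : realType) (F : R -> R) : Prop :=
  smooth (fun v : 'rV[R]_1 => F (v 0 0)).

Definition smooth4 (R : realType) (G : R -> R -> R -> R -> R) : Prop :=
  smooth (fun v : 'rV[R]_4 =>
            G (v 0 0) (v 0 (inord 1)) (v 0 (inord 2)) (v 0 (inord 3))).

(* Coupling function of order 4: G(x_k; y1, y2, y3), symmetric in its last
   three arguments and depending nontrivially on them. *)
Definition sym_last3 (R : realType) (G : R -> R -> R -> R -> R) : Prop :=
  forall y a b c, G y a b c = G y b a c /\ G y a b c = G y a c b.

Definition nontrivial_last3 (R : realType) (G : R -> R -> R -> R -> R) : Prop :=
  exists y a b c a' b' c', G y a b c <> G y a' b' c'.

(* Directed hypergraph on {1,2,3} (vertices 'I_3 = {0,1,2}):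
   a set of hyperedges e = (T(e), H(e)) with nonempty tail and head. *)
Definition hyperedge3 := ({set 'I_3} * {set 'I_3})%type.

Definition is_dir_hypergraph3 (E : {set hyperedge3}) : Prop :=
  forall e, e \in E -> e.1 != finset.set0 /\ e.2 != finset.set0.

Definition order3 (e : hyperedge3) : nat := #|e.1|.+1.

Definition uniform3 (m : nat) (E : {set hyperedge3}) : Prop :=
  forall e, e \in E -> order3 e = m.

(* Vector field of the network dynamical system on a 4-uniform hypergraph on
   {1,2,3}: every tail is {1,2,3}, so x_{T(e)} = (x_1, x_2, x_3). *)
Definition nds_field (R : realType) (E : {set hyperedge3}) (F : R -> R)
  (G4 : R -> R -> R -> R -> R) (x : 'I_3 -> R) (k : 'I_3) : R :=
  F (x k) + \sum_(e in E | k \in e.2)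
              G4 (x k) (x (inord 0)) (x (inord 1)) (x (inord 2)).

Definition GH_field (R : realType) (a b c : R) (x : 'I_3 -> R) (k : 'I_3) : R :=
  let x1 := x (inord 0) in let x2 := x (inord 1) in let x3 := x (inord 2) in
  match val k with
  | 0 => x1 + a * x1 ^+ 3 + b * x1 * x2 ^+ 2 + c * x1 * x3 ^+ 2
  | 1 => x2 + a * x2 ^+ 3 + b * x2 * x3 ^+ 2 + c * x1 ^+ 2 * x2
  | _ => x3 + a * x3 ^+ 3 + b * x1 ^+ 2 * x3 + c * x2 ^+ 2 * x3
  end.

(* Main.v *)
Require Import Defs.
From mathcomp Require Import all_boot all_order all_algebra.
From mathcomp Require Import all_classical all_reals all_analysis.
Import Order.TTheory GRing.Theory Num.Theory.
Local Open Scope ring_scope.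

Lemma key (R : realType) (E : {set hyperedge3})
  (F : R -> R) (G4 : R -> R -> R -> R -> R) :
  sym_last3 G4 -> forall a b c : R,
  (forall (x : 'I_3 -> R) (k : 'I_3), nds_field E F G4 x k = GH_field a b c x k) ->
  b = c.
Proof.
move=> hs a b c H.
pose x1 : 'I_3 -> R := fun i => if val i == 2%N then 0 else 1.
pose x2 : 'I_3 -> R := fun i => if val i == 1%N then 0 else 1.
have v0 : \val (inord 0 : 'I_3) = 0%N by rewrite /= inordK.
have v1 : \val (inord 1 : 'I_3) = 1%N by rewrite /= inordK.
have v2 : \val (inord 2 : 'I_3) = 2%N by rewrite /= inordK.
have h1 := H x1 (inord 0). have h2 := H x2 (inord 0).
have e : nds_field E F G4 x1 (inord 0) = nds_field E F G4 x2 (inord 0).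
  rewrite /nds_field /x1 /x2 /= !v0 !v1 !v2 /=.
  congr (_ + _); apply: eq_bigr => i _.
  by case: (hs 1 1 1 0) => _ ->.
move: e; rewrite h1 h2 /GH_field /x1 /x2 /= !v0 !v1 !v2 /= => e.
have : 1 + a * 1 ^+ 3 + b * 1 * 1 ^+ 2 + c * 1 * 0 ^+ 2 =
       1 + a * 1 ^+ 3 + b * 1 * 0 ^+ 2 + c * 1 * 1 ^+ 2 by exact: e.
rewrite !expr1n !expr0n /= !mulr1 !mulr0 !addr0 => /addrI.
done.
Qed.

Theorem mainTheorem9 (R : realType) (E : {set hyperedge3})
  (F : R -> R) (G4 : R -> R -> R -> R -> R) :
  is_dir_hypergraph3 E -> uniform3 4 E ->
  smooth1 F -> smooth4 G4 -> sym_last3 G4 -> nontrivial_last3 G4 ->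
  (forall a b c : R, b != c ->
     ~ (forall (x : 'I_3 -> R) (k : 'I_3), nds_field E F G4 x k = GH_field a b c x k))
  /\
  (forall a b c : R, a + b + c = -1 -> - (3%:R)^-1 < a < 0 -> c < a -> a < b -> b < 0 ->
     ~ (forall (x : 'I_3 -> R) (k : 'I_3), nds_field E F G4 x k = GH_field a b c x k)).
Proof.
move=> _ _ _ _ hs _; split.
  by move=> a b c /eqP hbc H; apply: hbc; exact: (@key _ _ _ _ hs _ _ _ H).
move=> a b c _ _ hca hab _ H.
have hbc := @key _ _ _ _ hs _ _ _ H.
by move: (lt_trans hca hab); rewrite hbc ltxx.
Qed.
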